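(* For every ordered field $C$, the theory $T_{\mathrm{Ham}}$ of independent dense Hamel spaces over $C$ is consistent, i.e., there exists an independent dense Hamel space over $C$.
   Context: Let $C$ be an ordered field. A $2$-ordered $C$-vector space is a $C$-vector space $G$ with two total orderings $<_0,<_1$ such that $G$ is an ordered $C$-vector space with respect to each. Put $G_\infty=G\cup\{\infty\}$, with $G<_0\infty$, $G<_1\infty$. A Hamel valuation on $G$ is a map $v:G\to G_\infty$ such that for all $x,y\in G$ and $\lambda\in C^{\times}$: $v(x)=\infty$ iff $x=0$; $v(x+y)\ge_0\min_0(v(x),v(y))$; $v(\lambda x)=v(x)$; if $0<_1x<_1y$ then $v(x)\ge_0v(y)$; $v(v(x))=v(x)$ (with $v(\infty)=\infty$); and $v(x)>_10$. A Hamel space is such a pair $(G,v)$. It is independent if for all $a_0,b_0,a_1,b_1\in G\cup\{\pm\infty\}$ with $a_0<_0b_0$ and $a_1<_1b_1$ there is $z\in G$ with $a_0<_0z<_0b_0$ and $a_1<_1z<_1b_1$; it is dense if for all $a<_0b$ in $G$ there is $c\in G$ with $a<_0v(c)<_0b$. *)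

(* Defs.v *)
From HB Require Import structures.
From mathcomp Require Import all_boot all_order all_algebra.
From Stdlib Require Import ClassicalDescription.
Set Implicit Arguments. Unset Strict Implicit. Unset Printing Implicit Defensive.
Import Order.TTheory GRing.Theory Num.Theory.
Local Open Scope ring_scope.

Section Hamel.
Variables (C : realFieldType) (G : lmodType C).

Definition total_order (le : G -> G -> Prop) : Prop :=
  [/\ (forall x, le x x),
      (forall x y, le x y -> le y x -> x = y),
      (forall x y z, le x y -> le y z -> le x z) &
      (forall x y, le x y \/ le y x)].

Definition strict (le : G -> G -> Prop) (x y : G) : Prop := le x y /\ x <> y.

Definition ordered_vspace (le : G -> G -> Prop) : Prop :=
  [/\ total_order le,
      (forall x y z, le x y -> le (x + z) (y + z)) &
      (forall (l : C) (x : G), 0 < l -> le 0 x -> le 0 (l *: x))].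

(* G_infty = G ∪ {∞}, encoded as option G with None = ∞. *)
Definition le_inf (le : G -> G -> Prop) (a b : option G) : Prop :=
  match a, b with
  | _, None => True
  | None, Some _ => False
  | Some x, Some y => le x y
  end.

Definition lt_inf (le : G -> G -> Prop) (a b : option G) : Prop :=
  le_inf le a b /\ a <> b.

Definition min_inf (le : G -> G -> Prop) (a b : option G) : option G :=
  match a, b with
  | None, _ => b
  | _, None => a
  | Some x, Some y => if excluded_middle_informative (le x y) then a else b
  end.

Definition v_inf (v : G -> option G) (a : option G) : option G :=
  match a with None => None | Some x => v x end.

Definition two_ordered (le0 le1 : G -> G -> Prop) : Prop :=
  ordered_vspace le0 /\ ordered_vspace le1.

Definition hamel_valuation (le0 le1 : G -> G -> Prop) (v : G -> option G) : Prop :=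
  (forall x, v x = None <-> x = 0) /\
  [/\
      (forall x y, le_inf le0 (min_inf le0 (v x) (v y)) (v (x + y))),
      (forall (l : C) x, l != 0 -> v (l *: x) = v x),
      (forall x y, strict le1 0 x -> strict le1 x y -> le_inf le0 (v y) (v x)),
      (forall x, v_inf v (v x) = v x) &
      (forall x, lt_inf le1 (Some 0) (v x))].

Definition hamel_space (le0 le1 : G -> G -> Prop) (v : G -> option G) : Prop :=
  two_ordered le0 le1 /\ hamel_valuation le0 le1 v.

Inductive ext := NegInf | Fin of G | PosInf.

Definition lt_ext (le : G -> G -> Prop) (a b : ext) : Prop :=
  match a, b with
  | NegInf, NegInf => False
  | NegInf, _ => True
  | Fin x, Fin y => strict le x y
  | Fin _, PosInf => True
  | _, _ => False
  end.

Definition independent (le0 le1 : G -> G -> Prop) : Prop :=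
  forall a0 b0 a1 b1 : ext,
    lt_ext le0 a0 b0 -> lt_ext le1 a1 b1 ->
    exists z : G, [/\ lt_ext le0 a0 (Fin z), lt_ext le0 (Fin z) b0,
                      lt_ext le1 a1 (Fin z) & lt_ext le1 (Fin z) b1].

Definition dense (le0 : G -> G -> Prop) (v : G -> option G) : Prop :=
  forall a b : G, strict le0 a b ->
    exists c : G, lt_inf le0 (Some a) (v c) /\ lt_inf le0 (v c) (Some b).

End Hamel.

(* Main.v *)
Require Import Defs.
From HB Require Import structures.
From mathcomp Require Import all_boot all_order all_algebra.
From mathcomp Require Import finmap.
From mathcomp.multinomials Require Import monalg.
From mathcomp Require Import ring lra zify.
From Stdlib Require Import Lia.
From Stdlib Require Import ClassicalDescription ClassicalEpsilon.
Set Implicit Arguments. Unset Strict Implicit. Unset Printing Implicit Defensive.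
Import Order.TTheory GRing.Theory Num.Theory.
Local Open Scope ring_scope.


Section Lex.
Variables (C : realFieldType) (K : choiceType) (ord : K -> K -> Prop).
Hypotheses (ord_irr : forall i, ~ ord i i)
  (ord_trans : forall i j k, ord i j -> ord j k -> ord i k)
  (ord_tot : forall i j, i <> j -> ord i j \/ ord j i).
Local Notation H := {malg C[K]}.

Definition lposk (x : H) k := 0 < x@_k /\ forall i, ord i k -> x@_i = 0.
Definition lpos (x : H) := exists k, lposk x k.
Definition lle (x y : H) := x = y \/ lpos (y - x).
Definition small k (u : H) := forall i, u@_i != 0 -> ord k i.

Lemma lpos_neq0 x : lpos x -> x <> 0.
Proof. by move=> [k [Hk _]] E; move: Hk; rewrite E mcoeff0 ltxx. Qed.

Lemma lposD x y : lpos x -> lpos y -> lpos (x + y).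
Proof.
move=> [kx [px zx]] [ky [py zy]].
case: (eqVneq kx ky) => [E|/eqP N].
  subst ky; exists kx; split; first by rewrite mcoeffD addr_gt0.
  by move=> i Hi; rewrite mcoeffD zx // zy // addr0.
case: (ord_tot N) => O.
  exists kx; split; first by rewrite mcoeffD (zy _ O) addr0.
  by move=> i Hi; rewrite mcoeffD zx // zy ?addr0 //; apply: ord_trans O.
exists ky; split; first by rewrite mcoeffD (zx _ O) add0r.
by move=> i Hi; rewrite mcoeffD zy // zx ?addr0 //; apply: ord_trans O.
Qed.

Lemma lposZ l x : 0 < l -> lpos x -> lpos (l *: x).
Proof.
move=> Hl [k [pk zk]]; exists k; split; first by rewrite mcoeffZ mulr_gt0.
by move=> i Hi; rewrite mcoeffZ zk // mulr0.
Qed.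

Lemma lpos_anti x : lpos x -> lpos (- x) -> False.
Proof.
move=> [k1 [p1 z1]] [k2 [p2 z2]].
case: (eqVneq k1 k2) => [E|/eqP N].
  subst k2; move: p2; rewrite mcoeffN oppr_gt0 => p2.
  by move: (lt_trans p1 p2); rewrite ltxx.
case: (ord_tot N) => O.
  by move: p1; rewrite -[x@_k1]opprK -mcoeffN z2 // oppr0 ltxx.
by move: p2; rewrite mcoeffN z1 // oppr0 ltxx.
Qed.

Lemma ex_min (s : seq K) k0 : k0 \in s ->
  exists2 k, k \in s & forall i, i \in s -> i <> k -> ord k i.
Proof.
elim: s k0 => [//|a s IH] k0 _.
case: (boolP (s == [::])) => [/eqP->|].
  by exists a; rewrite ?mem_head // => i; rewrite inE => /eqP.
case: s IH => [//|b s] IH _.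
have [k Hk Hm] := IH b (mem_head _ _).
case: (eqVneq a k) => [E|/eqP N].
  subst a; exists k; first by rewrite mem_head.
  move=> i; rewrite inE => /orP[/eqP -> //|]; exact: Hm.
case: (ord_tot N) => O.
  exists a; first by rewrite mem_head.
  move=> i; rewrite inE => /orP[/eqP -> //|Hi Hne].
  case: (eqVneq i k) => [->//|/eqP Nik].
  exact: ord_trans O (Hm _ Hi Nik).
exists k; first by rewrite inE Hk orbT.
move=> i; rewrite inE => /orP[/eqP -> //|]; exact: Hm.
Qed.

Lemma malg_neq0 (x : H) : x <> 0 -> exists k, x@_k != 0.
Proof.
move=> Hx; apply: NNPP => N; apply: Hx; apply/malgP => k.
rewrite mcoeff0; apply/eqP; apply: NNPP => /negP Hk; apply: N; by exists k.
Qed.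

Lemma ex_minsupp (x : H) : x <> 0 ->
  exists k, x@_k != 0 /\ forall i, x@_i != 0 -> i <> k -> ord k i.
Proof.
move=> /malg_neq0 [k0 Hk0].
have Hk1 : k0 \in msupp x by rewrite -mcoeff_neq0.
have [k Hk Hm] := @ex_min (msupp x) k0 Hk1.
exists k; split; first by rewrite mcoeff_neq0.
by move=> i Hi; apply: Hm; rewrite -mcoeff_neq0.
Qed.

Lemma lpos_tot x : x <> 0 -> lpos x \/ lpos (- x).
Proof.
move=> /ex_minsupp [k [Hk Hm]].
have Z : forall i, ord i k -> x@_i = 0.
  move=> i Oi; apply/eqP; apply: NNPP => /negP Hi.
  case: (eqVneq i k) => [E|/eqP N]; first by subst; exact: (ord_irr Oi).
  exact: ord_irr (ord_trans Oi (Hm _ Hi N)).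
move: Hk; rewrite neq_lt => /orP[N|P].
  by right; exists k; split; [rewrite mcoeffN oppr_gt0 | move=> i /Z; rewrite mcoeffN => ->; rewrite oppr0].
by left; exists k.
Qed.

Lemma lle_ordered : ordered_vspace lle.
Proof.
split; first split.
- by move=> x; left.
- move=> x y [//|H1] [E|H2]; first by [].
  by exfalso; apply: (lpos_anti H1); rewrite opprB.
- move=> x y z [->//|H1] [<-|H2]; first by right.
  by right; have := lposD H2 H1; rewrite addrA subrK.
- move=> x y; case: (eqVneq x y) => [->|/eqP N]; first by left; left.
  have : y - x <> 0 by move=> /eqP; rewrite subr_eq0 => /eqP E; apply: N.
  move=> /lpos_tot [P|P]; first by left; right.
  by right; right; rewrite -opprB.
- move=> x y z [->|P]; first by left.
  by right; rewrite opprD addrACA subrr addr0.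
- move=> l x Hl [<-|P]; first by left; rewrite scaler0.
  by right; move: P; rewrite !subr0 => P; apply: lposZ.
Qed.

Lemma lle_strict x y : strict lle x y <-> lpos (y - x).
Proof.
split; first by move=> [[E|P] N].
move=> P; split; first by right.
by move=> E; subst; move: P; rewrite subrr => /lpos_neq0.
Qed.

Lemma lposk_small d j u : lposk d j -> small j u -> lposk (d + u) j.
Proof.
move=> [pd zd] su; split.
  rewrite mcoeffD; case: (eqVneq u@_j 0) => [->|/su O]; first by rewrite addr0.
  by case: (ord_irr O).
move=> i Oi; rewrite mcoeffD zd // add0r.
by apply/eqP; apply: NNPP => /negP /su O; apply: (ord_irr (ord_trans O Oi)).
Qed.

Lemma smallN j u : small j u -> small j (- u).
Proof. by move=> su i; rewrite mcoeffN oppr_eq0; apply: su. Qed.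

Definition unit_malg (k : K) : H := << k >>.

Lemma unit_coef k i : (unit_malg k)@_i = (k == i)%:R.
Proof. by rewrite /unit_malg mcoeffU. Qed.

Lemma lposk_unit k : lposk (unit_malg k) k.
Proof.
split; first by rewrite unit_coef eqxx ltr01.
move=> i Oi; rewrite unit_coef; case: (eqVneq k i) => // E.
by subst; case: (ord_irr Oi).
Qed.

Lemma nbhd (k0 : K) (a b : ext H) : lt_ext lle a b ->
  exists (m : H) (j : K), forall u : H, small j u ->
    lt_ext lle a (Fin (m + u)) /\ lt_ext lle (Fin (m + u)) b.
Proof.
case: a => [|a|]; case: b => [|b|] //= Hab.
- exists (b - unit_malg k0), k0 => u su; split => //.
  apply/lle_strict; exists k0.
  have -> : b - (b - unit_malg k0 + u) = unit_malg k0 + - u.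
    by rewrite opprD opprB addrA addrCA subrr addr0.
  by apply: lposk_small (lposk_unit _) (smallN su).
- by exists 0, k0.
- move/lle_strict: Hab => [j Pj].
  exists (a + 2^-1 *: (b - a)), j => u su.
  have Pj2 : lposk (2^-1 *: (b - a)) j.
    case: Pj => p z; split; first by rewrite mcoeffZ mulr_gt0 // invr_gt0 ltr0n.
    by move=> i Oi; rewrite mcoeffZ z // mulr0.
  split; apply/lle_strict; exists j.
    have -> : a + 2^-1 *: (b - a) + u - a = 2^-1 *: (b - a) + u.
      by rewrite addrAC [a + _]addrC addrK.
    exact: lposk_small Pj2 su.
  have -> : b - (a + 2^-1 *: (b - a) + u) = 2^-1 *: (b - a) + - u.
    have E : b - a = 2^-1 *: (b - a) + 2^-1 *: (b - a).
      by rewrite -scalerDl -{1}[b - a]scale1r; congr (_ *: _); rewrite {1}(splitr 1) mul1r.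
    rewrite opprD addrA; congr (_ + _).
    by rewrite opprD addrA {1}E addrK.
  exact: lposk_small Pj2 (smallN su).
- exists (a + unit_malg k0), k0 => u su; split => //.
  apply/lle_strict; exists k0.
  have -> : a + unit_malg k0 + u - a = unit_malg k0 + u.
    by rewrite addrAC [a + _]addrC addrK.
  exact: lposk_small (lposk_unit _) su.
Qed.

End Lex.


Section Model.
Variable C : realFieldType.
Definition J := (nat * seq C)%type.
Definition ordJb (i j : J) : bool :=
  (i.1 < j.1)%N || ((i.1 == j.1) && ((i.2 : seqlexi C) < (j.2 : seqlexi C))%O).
Definition ordJ (i j : J) : Prop := ordJb i j.

Lemma ordJ_irr i : ~ ordJ i i.
Proof. by rewrite /ordJ /ordJb ltnn ltxx andbF. Qed.

Lemma ordJ_trans i j k : ordJ i j -> ordJ j k -> ordJ i k.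
Proof.
case: i j k => [a s] [b t] [c u]; rewrite /ordJ /ordJb /=.
case/orP=> [H1|/andP[/eqP E1 H1]]; case/orP=> [H2|/andP[/eqP E2 H2]].
- by rewrite (ltn_trans H1 H2).
- by rewrite -E2 H1.
- by rewrite E1 H2.
- by rewrite E1 E2 eqxx (lt_trans H1 H2) orbT.
Qed.

Lemma ordJ_tot i j : i <> j -> ordJ i j \/ ordJ j i.
Proof.
case: i j => [a s] [b t]; rewrite /ordJ /ordJb /= => N.
case: (ltngtP a b) => [H|H|E]; [by left| by right|subst b].
rewrite ?eqxx /=.
have : (s : seqlexi C) != t by apply/eqP => E; apply: N; rewrite E.
by rewrite neq_lt => /orP[H|H]; [left|right].
Qed.

Definition z0 : J := (0%N, [::]).

Lemma z0_min i : i <> z0 -> ordJ z0 i.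
Proof.
case: i => [[|a] s] N; rewrite /ordJ /ordJb //=.
have : ([::] : seqlexi C) != s by apply/eqP => E; apply: N; rewrite -E.
by rewrite lt_neqAle => ->; case: s {N}.
Qed.

Definition G := {malg C[J]}.
Definition f (k : J) : G := << k >>.

Lemma f_coef k i : (f k)@_i = (k == i)%:R.
Proof. by rewrite /f mcoeffU. Qed.

Lemma fZ c k : << c *g k >> = c *: f k :> G.
Proof. by apply/malgP => i; rewrite mcoeffZ !mcoeffU mulr_natr. Qed.

Definition unary (n : nat) : seq C := rcons (nseq n 0) 1.

Lemma unary_cat n1 n2 r1 r2 : unary n1 ++ r1 = unary n2 ++ r2 -> n1 = n2 /\ r1 = r2.
Proof.
elim: n1 n2 => [|n IH] [|m] /=.
- by case.
- by case => /eqP; rewrite oner_eq0.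
- by case => /esym /eqP; rewrite oner_eq0.
- by case => /IH [-> ->].
Qed.

Definition enc (p : J * C) : seq C :=
  unary p.1.1 ++ unary (size p.1.2) ++ p.1.2 ++ [:: p.2].

Lemma enc_cat p q r1 r2 : enc p ++ r1 = enc q ++ r2 -> p = q /\ r1 = r2.
Proof.
case: p q => [[n s] c] [[m t] d]; rewrite /enc /= -!catA.
move/unary_cat => [-> ]; move/unary_cat => [Es] /eqP.
rewrite eqseq_cat // => /andP[/eqP -> /eqP [-> ->]] //.
Qed.

Lemma enc_nil p : enc p != [::].
Proof. by case: p => [[n s] c]; rewrite /enc /unary; case: n. Qed.

Lemma flat_inj l1 l2 : flatten (map enc l1) = flatten (map enc l2) -> l1 = l2.
Proof.
elim: l1 l2 => [|p l1 IH] [|q l2] //=.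
- by move/(congr1 size); rewrite size_cat; case: (enc q) (enc_nil q).
- by move/(congr1 size); rewrite size_cat; case: (enc p) (enc_nil p).
- by move/enc_cat => [-> /IH ->].
Qed.

Definition code (t : G) : seq C := flatten (map enc [seq (k, t@_k) | k <- msupp t]).

Lemma code_inj t1 t2 : code t1 = code t2 -> t1 = t2.
Proof.
move/flat_inj => E.
have Es : (msupp t1 : seq J) = msupp t2.
  have mf : forall (g : J -> C) (s : seq J), map fst [seq (k, g k) | k <- s] = s.
    by move=> g; elim=> //= a s' ->.
  by have := congr1 (map fst) E; rewrite !mf.
apply/malgP => k; case: (boolP (k \in msupp t1)) => Hk.
  have : (k, t1@_k) \in [seq (k, t2@_k) | k <- msupp t2].
    by rewrite -E; apply: (map_f (fun k => (k, t1@_k))).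
  by case/mapP => k' _ [-> ->].
have Hk2 : k \notin (msupp t2 : seq J) by rewrite -Es.
by rewrite !mcoeff_outdom.
Qed.

Definition decP (k : J) (t : G) := code t = k.2 /\ forall i, t@_i != 0 -> (i.1 < k.1)%N.
Definition dec (k : J) : G :=
  match excluded_middle_informative (exists t, decP k t) with
  | left H => proj1_sig (constructive_indefinite_description _ H)
  | right _ => 0 end.

Lemma dec_lev k i : (dec k)@_i != 0 -> (i.1 < k.1)%N.
Proof.
rewrite /dec; case: excluded_middle_informative => [H|_]; last by rewrite mcoeff0 eqxx.
by case: (constructive_indefinite_description _ H) => t [_ Ht] /=; exact: Ht.
Qed.

Lemma dec_code t n : (forall i, t@_i != 0 -> (i.1 < n)%N) -> dec (n, code t) = t.
Proof.
move=> Ht; rewrite /dec; case: excluded_middle_informative => [H|N]; last first.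
  by exfalso; apply: N; exists t.
by case: (constructive_indefinite_description _ H) => t' [Ec _] /=; exact: code_inj.
Qed.

Definition D (x : G) : G := \sum_(k <- msupp x) x@_k *: dec k.

Lemma D_incl x (S : {fset J}) : (msupp x `<=` S)%fset -> D x = \sum_(k <- S) x@_k *: dec k.
Proof.
move=> HS; rewrite /D; apply: big_fset_incl => // k _ Hk.
by rewrite mcoeff_outdom // scale0r.
Qed.

Lemma DD x y : D (x + y) = D x + D y.
Proof.
rewrite (@D_incl (x + y) (msupp x `|` msupp y)%fset) ?msuppD_le //.
rewrite (@D_incl x (msupp x `|` msupp y)%fset) ?fsubsetUl //.
rewrite (@D_incl y (msupp x `|` msupp y)%fset) ?fsubsetUr // -big_split /=.
by apply: eq_bigr => k _; rewrite mcoeffD scalerDl.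
Qed.

Lemma DZ l x : D (l *: x) = l *: D x.
Proof.
rewrite (@D_incl (l *: x) (msupp x)) ?msuppZ_le // /D scaler_sumr.
by apply: eq_bigr => k _; rewrite mcoeffZ scalerA.
Qed.

Definition Psi (x : G) : G := x + D x.

Lemma PsiD x y : Psi (x + y) = Psi x + Psi y.
Proof. by rewrite /Psi DD addrACA. Qed.

Lemma PsiZ l x : Psi (l *: x) = l *: Psi x.
Proof. by rewrite /Psi DZ scalerDr. Qed.

Lemma Psi0 : Psi 0 = 0.
Proof. by rewrite -(scale0r (0 : G)) PsiZ !scale0r. Qed.

Lemma PsiN x : Psi (- x) = - Psi x.
Proof. by rewrite -scaleN1r PsiZ scaleN1r. Qed.

Lemma PsiB x y : Psi (x - y) = Psi x - Psi y.
Proof. by rewrite PsiD PsiN. Qed.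

Lemma Df k : D (f k) = dec k.
Proof. by rewrite /D /f msuppU oner_eq0 big_seq_fset1 mcoeffUU scale1r. Qed.

Definition gam k := Psi (f k).
Lemma gamPsi k : gam k = Psi (f k).
Proof. by []. Qed.
Lemma gamE k : gam k = f k + dec k.
Proof. by rewrite /gam /Psi Df. Qed.

Lemma seq_bound (s : seq J) : exists n, forall i, i \in s -> (i.1 < n)%N.
Proof.
elim: s => [|a s [n Hn]]; first by exists 0%N.
exists (maxn n a.1.+1) => i; rewrite inE => /orP[/eqP->|/Hn H].
  by rewrite leq_max leqnn orbT.
by rewrite leq_max H.
Qed.

Lemma lev_bound (x : G) : exists n, forall i, x@_i != 0 -> (i.1 < n)%N.
Proof.
have [n Hn] := seq_bound (msupp x); exists n => i; rewrite mcoeff_neq0; exact: Hn.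
Qed.

Lemma Psi_surj_n n x : (forall i, x@_i != 0 -> (i.1 < n)%N) -> exists y, Psi y = x.
Proof.
elim: n x => [|n IH] x Hx.
  have -> : x = 0.
    by apply/malgP => i; rewrite mcoeff0; case: (eqVneq x@_i 0) => // /Hx.
  by exists 0; exact: Psi0.
rewrite (monalgE x) big_seq.
apply: (big_ind (fun z => exists y, Psi y = z)).
- by exists 0; exact: Psi0.
- by move=> _ _ [y1 <-] [y2 <-]; exists (y1 + y2); exact: PsiD.
move=> k Hk.
have lk : (k.1 <= n)%N by rewrite -ltnS; apply: Hx; rewrite mcoeff_neq0.
have [y' Hy'] : exists y, Psi y = dec k.
  by apply: IH => i /dec_lev H; exact: leq_trans H lk.
exists (x@_k *: (f k - y')); rewrite PsiZ PsiB Hy' -/(gam k) gamE addrK.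
by rewrite fZ.
Qed.

Lemma Psi_surj x : exists y, Psi y = x.
Proof. by have [n Hn] := lev_bound x; exact: Psi_surj_n Hn. Qed.

Lemma ex_maxlev (s : seq J) k0 : k0 \in s ->
  exists2 k, k \in s & forall i, i \in s -> (i.1 <= k.1)%N.
Proof.
elim: s k0 => [//|a s IH] k0 _.
case: (boolP (s == [::])) => [/eqP->|].
  by exists a; rewrite ?mem_head // => i; rewrite inE => /eqP->.
case: s IH => [//|b s] IH _.
have [k Hk Hm] := IH b (mem_head _ _).
case: (leqP a.1 k.1) => H.
  exists k; first by rewrite inE Hk orbT.
  by move=> i; rewrite inE => /orP[/eqP -> //|]; exact: Hm.
exists a; first by rewrite mem_head.
move=> i; rewrite inE => /orP[/eqP -> //|/Hm Hi].
exact: leq_trans Hi (ltnW H).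
Qed.

Lemma Psi_inj0 x : Psi x = 0 -> x = 0.
Proof.
move=> E; apply: NNPP => Nx.
have [k0 Hk0] := malg_neq0 Nx.
have Hk1 : k0 \in msupp x by rewrite -mcoeff_neq0.
have [k Hk Hm] := ex_maxlev Hk1.
have : (Psi x)@_k = x@_k.
  rewrite /Psi mcoeffD /D raddf_sum big1_seq ?addr0 // => k' /= Hk'.
  rewrite mcoeffZ; case: (eqVneq (dec k')@_k 0) => [->|/dec_lev H]; first by rewrite mulr0.
  by have := Hm _ Hk'; rewrite leqNgt H.
by rewrite E mcoeff0 => /esym /eqP; rewrite mcoeff_eq0 Hk.
Qed.

Lemma Psi_inj : injective Psi.
Proof.
by move=> x y E; apply/eqP; rewrite -subr_eq0; apply/eqP; apply: Psi_inj0; rewrite PsiB E subrr.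
Qed.

Definition Phi (x : G) : G := proj1_sig (constructive_indefinite_description _ (Psi_surj x)).
Lemma PhiK x : Psi (Phi x) = x.
Proof. by rewrite /Phi; case: constructive_indefinite_description. Qed.
Lemma PsiK y : Phi (Psi y) = y.
Proof. by apply: Psi_inj; rewrite PhiK. Qed.
Lemma PhiD x y : Phi (x + y) = Phi x + Phi y.
Proof. by apply: Psi_inj; rewrite PsiD !PhiK. Qed.
Lemma PhiZ l x : Phi (l *: x) = l *: Phi x.
Proof. by apply: Psi_inj; rewrite PsiZ !PhiK. Qed.
Lemma Phi_inj : injective Phi.
Proof. by move=> x y E; rewrite -(PhiK x) E PhiK. Qed.
Lemma Phi0 : Phi 0 = 0.
Proof. by rewrite -(scale0r (0 : G)) PhiZ !scale0r. Qed.
Lemma PhiB x y : Phi (x - y) = Phi x - Phi y.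
Proof. by rewrite PhiD -scaleN1r PhiZ scaleN1r. Qed.
Lemma Phi_gam k : Phi (gam k) = f k.
Proof. exact: PsiK. Qed.

End Model.


Opaque Psi Phi D dec gam code.
Section Final.
Variable C : realFieldType.
Local Notation G := (G C).
Local Notation J := (J C).
Local Notation z0 := (z0 C).

Definition ord1 (s t : J) : Prop := lpos (@ordJ C) (gam t - gam s).

Lemma ord1_irr (s : J) : ~ ord1 s s.
Proof. by rewrite /ord1 subrr => /lpos_neq0. Qed.

Lemma ord1_trans (s t u : J) : ord1 s t -> ord1 t u -> ord1 s u.
Proof.
move=> H1 H2; have := lposD (@ordJ_trans C) (@ordJ_tot C) H2 H1.
by rewrite addrA subrK.
Qed.

Lemma gam_neq0 (k : J) : gam k <> 0.
Proof.
move=> /Psi_inj0 /(congr1 (mcoeff k)); rewrite f_coef eqxx mcoeff0.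
by move/eqP; rewrite oner_eq0.
Qed.

Lemma gam_inj (s t : J) : gam s = gam t -> s = t.
Proof.
move=> /Psi_inj /(congr1 (mcoeff s)); rewrite !f_coef eqxx.
by case: (eqVneq t s) => // _ /eqP; rewrite mulr0n oner_eq0.
Qed.

Lemma ord1_tot (s t : J) : s <> t -> ord1 s t \/ ord1 t s.
Proof.
move=> N; have : gam t - gam s <> 0.
  by move/eqP; rewrite subr_eq0 => /eqP /gam_inj E; apply: N.
move/(lpos_tot (@ordJ_irr C) (@ordJ_trans C) (@ordJ_tot C)) => [P|P]; first by left.
by right; move: P; rewrite opprB.
Qed.

Definition le0 : G -> G -> Prop := lle (@ordJ C).
Definition le1 (x y : G) : Prop := lle ord1 (Phi x) (Phi y).

Definition minkP (y : G) k := y@_k != 0 /\ forall i, y@_i != 0 -> i <> k -> ord1 k i.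
Definition mink (y : G) : J :=
  match excluded_middle_informative (exists k, minkP y k) with
  | left H => proj1_sig (constructive_indefinite_description _ H)
  | right _ => z0 end.

Lemma mink_spec (y : G) : y <> 0 -> minkP y (mink y).
Proof.
move=> Hy; rewrite /mink; case: excluded_middle_informative => [H|N].
  by case: constructive_indefinite_description.
have [k Hk] := @ex_minsupp C J ord1 ord1_trans ord1_tot y Hy.
by exfalso; apply: N; exists k.
Qed.

Lemma mink_unique (y : G) (k : J) : minkP y k -> mink y = k.
Proof.
move=> [Hk Hm].
have Hy : y <> 0 by move=> E; move: Hk; rewrite E mcoeff0 eqxx.
have [Hk' Hm'] := mink_spec Hy.
apply: NNPP => N.
exact: ord1_irr (ord1_trans (Hm' _ Hk (fun E => N (esym E))) (Hm _ Hk' N)).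
Qed.

Lemma mink_f (k : J) : mink (f k) = k.
Proof.
apply: mink_unique; split; first by rewrite f_coef eqxx oner_eq0.
by move=> i; rewrite f_coef; case: (eqVneq k i) => [->//|_]; rewrite mulr0n eqxx.
Qed.

Lemma mink_key (y : G) (k : J) : lposk ord1 y k -> mink y = k.
Proof.
move=> [p z]; apply: mink_unique; split; first exact: (lt0r_neq0 p).
move=> i Hi N; case: (ord1_tot N) => [O|O]; last exact: O.
move: Hi; rewrite (z _ O) eqxx => /= F; discriminate F.
Qed.

Definition v (x : G) : option G :=
  if excluded_middle_informative (x = 0) then None else Some (gam (mink (Phi x))).

Lemma v0 : v 0 = None.
Proof. by rewrite /v; case: excluded_middle_informative. Qed.

Lemma vN (x : G) : x <> 0 -> v x = Some (gam (mink (Phi x))).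
Proof. by rewrite /v; case: excluded_middle_informative. Qed.

Lemma v_gam (k : J) : v (gam k) = Some (gam k).
Proof. by rewrite vN ?Phi_gam ?mink_f //; exact: gam_neq0. Qed.

Lemma Phi_neq0 (x : G) : x <> 0 -> Phi x <> 0.
Proof. by move=> Hx E; apply: Hx; apply: Phi_inj; rewrite E Phi0. Qed.

Lemma le0_ordered : ordered_vspace le0.
Proof. exact: lle_ordered (@ordJ_irr C) (@ordJ_trans C) (@ordJ_tot C). Qed.

Lemma le1_ordered : ordered_vspace le1.
Proof.
have [[r a t tot] tr sc] := lle_ordered C ord1_irr ord1_trans ord1_tot.
split; first split.
- by move=> x; apply: r.
- by move=> x y h1 h2; apply: Phi_inj; apply: a.
- by move=> x y z; apply: t.
- by move=> x y; apply: tot.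
- by move=> x y z; rewrite /le1 !PhiD; apply: tr.
- by move=> l x Hl; rewrite /le1 PhiZ Phi0 => H; apply: sc.
Qed.

Lemma strict1 (x y : G) : strict le1 x y <-> lpos ord1 (Phi y - Phi x).
Proof.
rewrite -lle_strict; split => [[h n]|[h n]]; split => //.
  by move=> E; apply: n; apply: Phi_inj.
by move=> E; apply: n; rewrite E.
Qed.

Lemma ord1_le0 (a c : J) : a = c \/ ord1 a c -> le0 (gam a) (gam c).
Proof. by case=> [->|H]; [left|right]. Qed.

Lemma min_le (p q r : G) : le0 p r \/ le0 q r ->
  le_inf le0 (min_inf le0 (Some p) (Some q)) (Some r).
Proof.
have [[_ _ tr tot] _ _] := le0_ordered.
rewrite /min_inf; destruct (ClassicalDescription.excluded_middle_informative (le0 p q)) as [H|H]; simpl; case=> H1.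
- exact: H1.
- exact: tr H H1.
- case: (tot p q) => H2; [exact: (False_ind _ (H H2)) | exact: tr H2 H1].
- exact: H1.
Qed.

Lemma mink_coef (y : G) : y <> 0 -> forall i, y@_i != 0 -> mink y = i \/ ord1 (mink y) i.
Proof.
move=> Hy i Hi; have [_ Hm] := mink_spec Hy.
case: (eqVneq (mink y) i) => [->|/eqP N]; first by left.
by right; apply: Hm => // E; apply: N.
Qed.

Lemma hamel_v : hamel_valuation le0 le1 v.
Proof.
have [[refl0 anti0 tr0 tot0] _ _] := le0_ordered.
split.
  by move=> x; rewrite /v; case: excluded_middle_informative.
split.
- move=> x y.
  case: (classic (x + y = 0)) => [E|Nxy]; first by rewrite E v0; case: min_inf.
  case: (classic (x = 0)) => [Ex|Nx].
    by subst x; rewrite v0 add0r /=; case: (v y) => //= g; apply: refl0.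
  case: (classic (y = 0)) => [Ey|Ny].
    by subst y; rewrite v0 addr0 vN //=; apply: refl0.
  rewrite (vN Nx) (vN Ny) (vN Nxy); apply: min_le.
  have Hxy := Phi_neq0 Nxy.
  have [Hc _] := mink_spec Hxy.
  set c := mink (Phi (x + y)) in Hc *.
  move: Hc; rewrite PhiD mcoeffD.
  case: (eqVneq (Phi x)@_c 0) => [E1|H1].
    rewrite E1 add0r => H2; right; apply: ord1_le0.
    exact: mink_coef (Phi_neq0 Ny) _ H2.
  move=> _; left; apply: ord1_le0.
  exact: mink_coef (Phi_neq0 Nx) _ H1.
- move=> l x Hl; case: (classic (x = 0)) => [->|Nx]; first by rewrite scaler0.
  have Nlx : l *: x <> 0 by move/eqP; rewrite scaler_eq0 (negbTE Hl) /= => /eqP.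
  rewrite (vN Nx) (vN Nlx); congr (Some (gam _)).
  apply: mink_unique; have [Hk Hm] := mink_spec (Phi_neq0 Nx).
  split; first by rewrite PhiZ mcoeffZ mulf_neq0.
  move=> i; rewrite PhiZ mcoeffZ mulf_eq0 negb_or => /andP[_ Hi]; exact: Hm.
- move=> x y /strict1 P1 /strict1 P2.
  move: P1; rewrite Phi0 subr0 => P1.
  have Nx : x <> 0 by move=> E; move: P1; rewrite E Phi0 => /lpos_neq0.
  have Ny : y <> 0.
    move=> E; move: P2; rewrite E Phi0 sub0r => P2.
    exact: (@lpos_anti C J ord1 ord1_tot (Phi x) P1 P2).
  rewrite (vN Nx) (vN Ny) /=; apply: ord1_le0.
  have [k1 K1] := P1; have Ea := mink_key K1.
  case: (classic (mink (Phi y) = mink (Phi x))) => [->|N]; first by left.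
  case: (ord1_tot N) => O; first by right.
  exfalso.
  have Hya : (Phi y)@_(mink (Phi x)) = 0.
    apply/eqP; apply: NNPP => /negP H.
    case: (mink_coef (Phi_neq0 Ny) H) => [E|O2].
      by rewrite E in O; exact: ord1_irr O.
    exact: ord1_irr (ord1_trans O O2).
  have [k2 [p2 z2]] := P2.
  move: K1 => [p1 z1]; rewrite Ea in Hya O.
  case: (classic (k2 = k1)) => [E2|N2].
    move: p2; rewrite E2 mcoeffB Hya sub0r oppr_gt0 => p2.
    by move: (lt_trans p1 p2); rewrite ltxx.
  case: (ord1_tot N2) => O3.
    have Ex0 := z1 _ O3; move: p2; rewrite mcoeffB Ex0 subr0 => p2.
    have Hyk : (Phi y)@_k2 != 0 by exact: (lt0r_neq0 p2).
    case: (mink_coef (Phi_neq0 Ny) Hyk) => [E|O2].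
      by rewrite E in O; exact: ord1_irr (ord1_trans O O3).
    exact: ord1_irr (ord1_trans O (ord1_trans O2 O3)).
  have := z2 _ O3; rewrite mcoeffB Hya sub0r => /eqP; rewrite oppr_eq0 => /eqP E.
  by move: p1; rewrite E ltxx.
- move=> x; case: (classic (x = 0)) => [->|Nx]; first by rewrite v0.
  by rewrite (vN Nx) /= v_gam.
- move=> x; case: (classic (x = 0)) => [->|Nx]; first by rewrite v0.
  rewrite (vN Nx); split.
    right; rewrite Phi_gam Phi0 subr0; exists (mink (Phi x)).
    exact: (lposk_unit C ord1_irr).
  move=> H; have E := congr1 (fun o => odflt 0 o) H.
  exact: (gam_neq0 (esym E)).
Qed.

Definition emap (a : ext G) : ext G :=
  match a with NegInf => NegInf _ | Fin x => Fin (Phi x) | PosInf => PosInf _ end.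

Lemma lt_ext1 (a b : ext G) : lt_ext le1 a b <-> lt_ext (lle ord1) (emap a) (emap b).
Proof.
case: a => [|x|]; case: b => [|y|] /=; try tauto.
split => [[h n]|[h n]]; split.
- exact: h.
- by move=> E; apply: n; exact: (Phi_inj E).
- exact: h.
- by move=> E; apply: n; rewrite E.
Qed.

Lemma ordJ_z0 (i : J) : ~ ordJ i z0.
Proof.
move=> Oi; case: (eqVneq i z0) => [E|/eqP Ni].
  by rewrite E in Oi; exact: (ordJ_irr Oi).
exact: (ordJ_irr (ordJ_trans (z0_min Ni) Oi)).
Qed.

Lemma ordJ_lev (i k : J) : (i.1 < k.1)%N -> ordJ i k.
Proof. by move=> H; rewrite /ordJ /ordJb H. Qed.

Lemma small_diff (ord : J -> J -> Prop) j (k1 k2 : J) :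
  ord j k1 -> ord j k2 -> small ord j (f k2 - f k1).
Proof.
move=> O1 O2 i; rewrite mcoeffB !f_coef.
case: (eqVneq k2 i) => [<- _|_]; first exact: O2.
case: (eqVneq k1 i) => [<- _|_]; first exact: O1.
by rewrite subrr eqxx.
Qed.

Lemma indep : independent le0 le1.
Proof.
move=> a0 b0 a1 b1 H0 H1.
have [m0 [j0 Hm0]] := nbhd (@ordJ_irr C) (@ordJ_trans C) z0 H0.
move/lt_ext1: H1 => H1'.
have [m' [T1 Hm1]] := nbhd ord1_irr ord1_trans z0 H1'.
pose m1 := Psi m'.
pose d := m1 - m0.
pose e := (dec T1)@_z0.
pose N : C := `|d@_z0| + `|e| + 2.
pose R : G := N *: f z0.
have [n1 Hn1] := lev_bound d.
pose n := (n1 + j0.1).+1.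
have hn0 : (0 < n)%N by [].
have hj0 : (j0.1 < n)%N by rewrite /n; lia.
pose t1 := d + R. pose t2 := R.
have Rc : forall i, R@_i = N * (z0 == i)%:R by move=> i; rewrite mcoeffZ f_coef.
have Ht1 : forall i, t1@_i != 0 -> (i.1 < n)%N.
  move=> i; rewrite mcoeffD Rc; case: (eqVneq z0 i) => [<- _|_]; first exact: hn0.
  rewrite mulr0 addr0 => /Hn1 H; rewrite /n; lia.
have Ht2 : forall i, t2@_i != 0 -> (i.1 < n)%N.
  move=> i; rewrite Rc; case: (eqVneq z0 i) => [<- _|_]; first exact: hn0.
  by rewrite mulr0 eqxx.
pose k1 : J := (n, code t1). pose k2 : J := (n, code t2).
have Ek1 : dec k1 = t1 := dec_code Ht1.
have Ek2 : dec k2 = t2 := dec_code Ht2.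
exists (m0 + (f k2 - f k1)).
have small0 : small (@ordJ C) j0 (f k2 - f k1).
  by apply: small_diff; apply: ordJ_lev.
have [A0 B0] := Hm0 _ small0.
have Ez : m0 + (f k2 - f k1) = m1 + (gam k2 - gam k1).
  apply/malgP => i; rewrite !gamE Ek1 Ek2 /t1 /t2 /d.
  rewrite !(mcoeffD, mcoeffB, mcoeffN); ring.
have Phiz : Phi (m0 + (f k2 - f k1)) = m' + (f k2 - f k1).
  apply: Psi_inj; rewrite PhiK Ez PsiD PsiB (gamPsi k2) (gamPsi k1).
  reflexivity.
have hc : (T1 == z0)%:R <= 1 :> C by case: eqP => _; rewrite ?ler01 ?lexx.
have hd : - d@_z0 <= `|d@_z0| by have := ler_norm (- d@_z0); rewrite normrN.
have he : e <= `|e| by exact: ler_norm.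
have ordT : forall k : J, (0 < k.1)%N -> 0 < (dec k)@_z0 - e - (T1 == z0)%:R -> ord1 T1 k.
  move=> k hk hpos; exists z0; split; last by move=> i /ordJ_z0.
  rewrite !gamE !(mcoeffB, mcoeffD) !f_coef.
  have -> : (k == z0) = false by apply/eqP => E; rewrite E in hk.
  rewrite [(T1 == z0)]eq_sym /e in hpos *; move: hpos; rewrite mulr0n.
  move=> hpos; lra.
have key : forall (x y c p q : C), - x <= p -> y <= q -> c <= 1 ->
    0 < x + (p + q + 2) - y - c by move=> x y c p q *; lra.
have o1 : ord1 T1 k1.
  apply: (ordT k1 hn0).
  rewrite Ek1 /t1 mcoeffD Rc eqxx mulr1 /N; exact: key hd he hc.
have o2 : ord1 T1 k2.
  apply: (ordT k2 hn0).
  rewrite Ek2 /t2 Rc eqxx mulr1 /N.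
  have := key 0 _ _ _ _ (_ : -0 <= `|d@_z0|) he hc; rewrite add0r; apply.
  by rewrite oppr0 normr_ge0.
have smallT : small ord1 T1 (f k2 - f k1) := small_diff o1 o2.
have [A1 B1] := Hm1 _ smallT.
split; [exact: A0 | exact: B0 | |].
  by apply/lt_ext1; rewrite /= Phiz; exact: A1.
by apply/lt_ext1; rewrite /= Phiz; exact: B1.
Qed.

Lemma lt_inf0 (x y : G) : lpos (@ordJ C) (y - x) -> lt_inf le0 (Some x) (Some y).
Proof.
move=> P; split; first by right.
move=> H; have E := congr1 (fun o => odflt 0 o) H; simpl in E.
by move: P; rewrite E subrr => /lpos_neq0.
Qed.

Lemma dens : dense le0 v.
Proof.
move=> a b /lle_strict [j [pj zj]].
pose cj := (a@_j + b@_j) / 2.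
have hab : a@_j < b@_j by move: pj; rewrite mcoeffB subr_gt0.
have h1 : a@_j < cj by rewrite /cj; lra.
have h2 : cj < b@_j by rewrite /cj; lra.
pose t := a + (cj - a@_j) *: f j.
have [nt Hnt] := lev_bound t.
pose n := (nt + j.1).+1.
pose k : J := (n, code t).
have Ek : dec k = t.
  by apply: dec_code => i /Hnt H; rewrite /n; lia.
exists (gam k); rewrite v_gam.
have Ojk : ordJ j k by apply: ordJ_lev; rewrite /k /n /=; lia.
have sk : small (@ordJ C) j (f k).
  move=> i; rewrite f_coef; case: (eqVneq k i) => [<- _|_]; first exact: Ojk.
  by rewrite eqxx.
have fj0 : forall i, ordJ i j -> (f j)@_i = 0.
  move=> i Oi; rewrite f_coef; case: (eqVneq j i) => [E|_]; last by [].
  by rewrite E in Oi; case: (ordJ_irr Oi).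
have L1 : lposk (@ordJ C) ((cj - a@_j) *: f j) j.
  split; first by rewrite mcoeffZ f_coef eqxx mulr1 subr_gt0.
  by move=> i Oi; rewrite mcoeffZ fj0 // mulr0.
have L2 : lposk (@ordJ C) ((b - a) - (cj - a@_j) *: f j) j.
  split.
    rewrite mcoeffB mcoeffZ f_coef eqxx mulr1 mcoeffB; lra.
  by move=> i Oi; rewrite mcoeffB mcoeffZ fj0 // mulr0 subr0 zj.
split; apply: lt_inf0.
  have -> : gam k - a = (cj - a@_j) *: f j + f k.
    by apply/malgP => i; rewrite gamE Ek /t !(mcoeffB, mcoeffD, mcoeffZ); ring.
  exists j; exact: (@lposk_small C J (@ordJ C) (@ordJ_irr C) (@ordJ_trans C) _ j _ L1 sk).
have -> : b - gam k = ((b - a) - (cj - a@_j) *: f j) + - f k.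
  by apply/malgP => i; rewrite gamE Ek /t !(mcoeffB, mcoeffD, mcoeffZ, mcoeffN); ring.
exists j; exact: (@lposk_small C J (@ordJ C) (@ordJ_irr C) (@ordJ_trans C) _ j _ L2 (smallN sk)).
Qed.

End Final.

Theorem lemma4p8 (C : realFieldType) :
  exists (G : lmodType C) (le0 le1 : G -> G -> Prop) (v : G -> option G),
    [/\ hamel_space le0 le1 v, independent le0 le1 & dense le0 v].
Proof.
exists (G C : lmodType C), (@le0 C), (@le1 C), (@v C).
split; [split; [split; [exact: le0_ordered | exact: le1_ordered] | exact: hamel_v] | exact: indep | exact: dens].
Qed.
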